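(* Let $\mathfrak{n}$ be a $2$-step nilpotent real Lie algebra with center $\mathfrak{z}$ and commutator $\mathfrak{n}'$, and let $J$ be a linear map with $J^2=-I$ and $J\mathfrak{n}'\subset\mathfrak{z}$. Let $\langle\cdot,\cdot\rangle$ be a $J$-compatible inner product, $\mathfrak{z}_0=\mathfrak{n}'+J\mathfrak{n}'$, $\mathfrak{v}=\mathfrak{z}_0^{\perp}$, $J_{\mathfrak{v}}=J|_{\mathfrak{v}}$, $\dim\mathfrak{v}=2n$, and $j:\mathfrak{z}_0\to\mathfrak{so}(\mathfrak{v})$ defined by $\langle j(z)v,w\rangle=\langle z,[v,w]\rangle$. Put $\mathfrak{n}'_J=\mathfrak{n}'\cap J\mathfrak{n}'$, let $\mathfrak{z}_1$ be the orthogonal complement of $\mathfrak{n}'_J$ in $\mathfrak{n}'$ (so that $J\mathfrak{z}_1\perp\mathfrak{n}'$), and let $\mathfrak{b}\subset\mathfrak{n}'_J$ be any subspace with orthogonal decomposition $\mathfrak{n}'_J=\mathfrak{b}\oplus J\mathfrak{b}$. The following are equivalent: (i) $J$ is integrable; (ii) $j(z)\in\mathfrak{u}(n)$ for all $z\in\mathfrak{z}_1$, and $j(Jz)-\tfrac12[J_{\mathfrak{v}},j(z)]\in\mathfrak{u}(n)$ for all $z\in\mathfrak{b}$; (iii) $j(z)\in\mathfrak{u}(n)$ for all $z\in\mathfrak{z}_1$, and $j(Jz)_-=\tfrac12[J_{\mathfrak{v}},j(z)]$ for all $z\in\mathfrak{b}$.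
   Context: $J$ integrable means $N_J(x,y)=[x,y]+J([Jx,y]+[x,Jy])-[Jx,Jy]=0$ for all $x,y$. $\mathfrak{u}(n)=\{T\in\mathfrak{so}(\mathfrak{v}): T J_{\mathfrak{v}}=J_{\mathfrak{v}}T\}$. For $T\in\operatorname{End}(\mathfrak{v})$, $T_{\pm}=\tfrac12(T\mp J_{\mathfrak{v}}TJ_{\mathfrak{v}})$, so $T=T_++T_-$ with $T_+$ commuting and $T_-$ anticommuting with $J_{\mathfrak{v}}$. $[A,B]=AB-BA$. A Lie algebra $\mathfrak{n}$ is $2$-step nilpotent if it is non-abelian and $\mathfrak{n}'\subset\mathfrak{z}$. *)

(* Defs.v *)
From HB Require Import structures.
From mathcomp Require Import all_boot all_order all_algebra.
From mathcomp Require Import reals.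
From Stdlib Require Import ClassicalEpsilon.
Set Implicit Arguments. Unset Strict Implicit. Unset Printing Implicit Defensive.
Import Order.TTheory GRing.Theory Num.Theory.
Local Open Scope ring_scope.

Section LieDefs.
Variables (R : realType) (V : vectType R).
Variables (br : V -> V -> V) (J : V -> V) (ip : V -> V -> R).

Definition lie_bracket : Prop :=
  [/\ forall (a : R) x y z, br (a *: x + y) z = a *: br x z + br y z,
      forall x y, br x y = - br y x &
      forall x y z, br x (br y z) + br y (br z x) + br z (br x y) = 0].

Definition almost_complex : Prop :=
  (forall (a : R) x y, J (a *: x + y) = a *: J x + J y) /\ (forall x, J (J x) = - x).

Definition inner_product : Prop :=
  [/\ forall (a : R) x y z, ip (a *: x + y) z = a * ip x z + ip y z,
      forall x y, ip x y = ip y x &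
      forall x, x != 0 -> 0 < ip x x].

Definition J_compatible : Prop := forall x y, ip (J x) (J y) = ip x y.

Definition comm (x : V) : Prop :=
  exists s : seq (V * V), x = \sum_(p <- s) br p.1 p.2.

Definition center (x : V) : Prop := forall y, br x y = 0.

Definition two_step_nilpotent : Prop :=
  (exists x y, br x y != 0) /\ (forall x, comm x -> center x).

Definition z0 (x : V) : Prop := exists a b, [/\ comm a, comm b & x = a + J b].

Definition vpart (x : V) : Prop := forall y, z0 y -> ip x y = 0.

Definition nJ (x : V) : Prop := comm x /\ exists y, comm y /\ x = J y.

Definition z1 (x : V) : Prop := comm x /\ forall y, nJ y -> ip x y = 0.

Definition j_spec (z v u : V) : Prop :=
  vpart u /\ forall w, vpart w -> ip u w = ip z (br v w).

Definition jmap (z v : V) : V := epsilon (inhabits 0) (j_spec z v).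

(* T (an endomorphism of v, given by its values on v) lies in u(n):
   T maps v to v, is skew-symmetric on v, and commutes with J_v *)
Definition in_u (T : V -> V) : Prop :=
  [/\ forall v, vpart v -> vpart (T v),
      forall v w, vpart v -> vpart w -> ip (T v) w = - ip v (T w) &
      forall v, vpart v -> T (J v) = J (T v)].

Definition commJ (T : V -> V) (v : V) : V := J (T v) - T (J v).

Definition minus_part (T : V -> V) (v : V) : V := 2^-1 *: (T v + J (T (J v))).

Definition integrable : Prop :=
  forall x y, br x y + J (br (J x) y + br x (J y)) - br (J x) (J y) = 0.

End LieDefs.

(* Main.v *)
Require Import Defs.
From HB Require Import structures.
From mathcomp Require Import all_boot all_order all_algebra.
From mathcomp Require Import reals.
Import Order.TTheory GRing.Theory Num.Theory.
Local Open Scope ring_scope.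

From mathcomp Require Import ring lra.
From Stdlib Require Import ClassicalEpsilon.
Set Implicit Arguments. Unset Strict Implicit. Unset Printing Implicit Defensive.

Section SpanTools.
Variables (R : realType) (V : vectType R).

Lemma span_closed (P : V -> Prop) (s : seq V) :
  P 0 -> (forall a x y, P x -> P y -> P (a *: x + y)) ->
  (forall x, x \in s -> P x) -> forall x, x \in <<s>>%VS -> P x.
Proof.
move=> P0 Pc Ps x /(coord_span (X := in_tuple s)) ->.
elim/big_rec: _ => // i y _ Py; apply: Pc => //; apply: Ps.
exact: mem_nth.
Qed.

Lemma span_sub (s t : seq V) : {subset s <= t} ->
  forall x, x \in <<s>>%VS -> x \in <<t>>%VS.
Proof.
move=> st; apply: span_closed; first exact: mem0v.
  by move=> a x y Hx Hy; rewrite memvD // memvZ.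
by move=> x /st; apply: memv_span.
Qed.

Lemma span_full (x : V) : x \in <<vbasis (fullv : {vspace V})>>%VS.
Proof. by rewrite (span_basis (vbasisP _)) memvf. Qed.

Lemma span_vb (U : {vspace V}) x : x \in U -> x \in <<vbasis U>>%VS.
Proof. by rewrite (span_basis (vbasisP _)). Qed.

End SpanTools.

Section IP.
Variables (R : realType) (V : vectType R) (ip : V -> V -> R).
Hypothesis Hip : inner_product ip.

Lemma ipLl a x y z : ip (a *: x + y) z = a * ip x z + ip y z.
Proof. by case: Hip. Qed.
Lemma ipC x y : ip x y = ip y x.
Proof. by case: Hip. Qed.
Lemma ipLr a x y z : ip z (a *: x + y) = a * ip z x + ip z y.
Proof. by rewrite ipC ipLl (ipC x) (ipC y). Qed.
Lemma ip0l z : ip 0 z = 0.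
Proof. by have := ipLl 1 0 0 z; rewrite scaler0 addr0 mul1r => E; lra. Qed.
Lemma ip0r z : ip z 0 = 0.
Proof. by rewrite ipC ip0l. Qed.
Lemma ipDl x y z : ip (x + y) z = ip x z + ip y z.
Proof. by have := ipLl 1 x y z; rewrite scale1r mul1r. Qed.
Lemma ipZl a x z : ip (a *: x) z = a * ip x z.
Proof. by rewrite -(addr0 (a *: x)) ipLl ip0l addr0. Qed.
Lemma ipNl x z : ip (- x) z = - ip x z.
Proof. by rewrite -scaleN1r ipZl mulN1r. Qed.
Lemma ipBl x y z : ip (x - y) z = ip x z - ip y z.
Proof. by rewrite ipDl ipNl. Qed.
Lemma ipDr x y z : ip z (x + y) = ip z x + ip z y.
Proof. by rewrite ipC ipDl (ipC x) (ipC y). Qed.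
Lemma ipZr a x z : ip z (a *: x) = a * ip z x.
Proof. by rewrite ipC ipZl ipC. Qed.
Lemma ipNr x z : ip z (- x) = - ip z x.
Proof. by rewrite ipC ipNl ipC. Qed.
Lemma ipBr x y z : ip z (x - y) = ip z x - ip z y.
Proof. by rewrite ipDr ipNr. Qed.
Lemma ip_eq0 x : ip x x = 0 -> x = 0.
Proof.
case: Hip => _ _ H E; apply/eqP; apply: contraT => /H.
by rewrite E ltxx.
Qed.

Definition linf (f : V -> R) := forall a x y, f (a *: x + y) = a * f x + f y.

Lemma linf0 f : linf f -> f 0 = 0.
Proof.
move=> Hf; have := Hf 1 0 0; rewrite scaler0 addr0 mul1r => E; lra.
Qed.

Lemma span_cons_dec (x : V) s w : w \in <<x :: s>>%VS ->
  exists k w2, w2 \in <<s>>%VS /\ w = k *: x + w2.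
Proof.
move: w; apply: (span_closed (P := fun w => exists k w2, w2 \in <<s>>%VS /\ w = k *: x + w2)).
- by exists 0, 0; rewrite mem0v scale0r addr0.
- move=> a y1 y2 [k1 [u1 [H1 ->]]] [k2 [u2 [H2 ->]]].
  exists (a * k1 + k2), (a *: u1 + u2); split; first by rewrite memvD // memvZ.
  by rewrite scalerDr scalerDl scalerA; rewrite addrACA.
- move=> y; rewrite in_cons => /orP [/eqP -> | Hy].
    by exists 1, 0; rewrite mem0v scale1r addr0.
  by exists 0, y; rewrite scale0r add0r memv_span.
Qed.

Lemma riesz_seq (s : seq V) : forall f, linf f ->
  exists u, u \in <<s>>%VS /\ forall w, w \in <<s>>%VS -> ip u w = f w.
Proof.
elim: s => [|x s IH] f Hf.
  exists 0; rewrite span_nil mem0v; split => // w; rewrite memv0 => /eqP ->.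
  by rewrite ip0l linf0.
have [u' [Hu' Eu']] := IH f Hf.
have Hg : linf (ip x) by move=> a y z; rewrite ipLr.
have [p [Hp Ep]] := IH _ Hg.
have sub : forall y, y \in <<s>>%VS -> y \in <<x :: s>>%VS.
  by apply: span_sub => y Hy; rewrite in_cons Hy orbT.
have Hx : x \in <<x :: s>>%VS by rewrite memv_span // mem_head.
have Exp : ip (x - p) p = 0 by rewrite ipBl (Ep p Hp) subrr.
have Exw : forall w, w \in <<s>>%VS -> ip (x - p) w = 0.
  by move=> w Hw; rewrite ipBl Ep // subrr.
have [E0 | Nz] := eqVneq (x - p) 0.
  have Exp' : x = p by apply/eqP; rewrite -subr_eq0 E0.
  exists u'; split; first exact: sub.
  move=> w /span_cons_dec [k [w2 [Hw2 ->]]].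
  by rewrite Hf ipLr (Eu' w2 Hw2) Exp' (Eu' p Hp).
set t := (f x - ip u' x) / ip (x - p) (x - p).
have Hpos : ip (x - p) (x - p) != 0.
  by apply/eqP => /ip_eq0 /eqP; rewrite (negbTE Nz).
exists (u' + t *: (x - p)); split.
  by apply: memvD; [exact: sub | apply: memvZ; apply: memvB => //; exact: sub].
have Ex : ip (u' + t *: (x - p)) x = f x.
  rewrite ipDl ipZl.
  have -> : ip (x - p) x = ip (x - p) (x - p) by rewrite ipBr Exp subr0.
  rewrite /t -mulrA mulVf // mulr1; ring.
move=> w /span_cons_dec [k [w2 [Hw2 ->]]].
by rewrite Hf ipLr Ex ipDl ipZl Exw // mulr0 addr0 Eu'.
Qed.
Lemma riesz_pred (P : V -> Prop) (s : seq V) :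
  (forall x, P x -> x \in <<s>>%VS) -> (forall x, x \in <<s>>%VS -> P x) ->
  forall f, linf f -> exists u, P u /\ forall w, P w -> ip u w = f w.
Proof.
move=> Ps sP f Hf; have [u [Hu Eu]] := riesz_seq s Hf.
by exists u; split; [exact: sP | move=> w /Ps; exact: Eu].
Qed.

Lemma proj_pred (P : V -> Prop) (s : seq V) :
  (forall x, P x -> x \in <<s>>%VS) -> (forall x, x \in <<s>>%VS -> P x) ->
  forall y, exists p, P p /\ forall w, P w -> ip p w = ip y w.
Proof.
move=> Ps sP y; apply: (riesz_pred Ps sP) => a x z; exact: ipLr.
Qed.
End IP.

Section Lie.
Variables (R : realType) (V : vectType R).
Variables (br : V -> V -> V) (J : V -> V) (ip : V -> V -> R).
Hypothesis Hlie : lie_bracket br.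
Hypothesis H2 : two_step_nilpotent br.
Hypothesis HJ : almost_complex J.
Hypothesis HJc : forall x, comm br x -> center br (J x).
Hypothesis Hip : inner_product ip.
Hypothesis Hcomp : J_compatible J ip.

Lemma brLl a x y z : br (a *: x + y) z = a *: br x z + br y z.
Proof. by case: Hlie. Qed.
Lemma brA x y : br x y = - br y x.
Proof. by case: Hlie. Qed.
Lemma br0l z : br 0 z = 0.
Proof.
have E := brLl 1 0 0 z; rewrite scaler0 addr0 scale1r in E.
by apply: (addrI (br 0 z)); rewrite addr0 -E.
Qed.
Lemma br0r z : br z 0 = 0.
Proof. by rewrite brA br0l oppr0. Qed.
Lemma brDl x y z : br (x + y) z = br x z + br y z.
Proof. by have := brLl 1 x y z; rewrite !scale1r. Qed.
Lemma brZl a x z : br (a *: x) z = a *: br x z.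
Proof. by have := brLl a x 0 z; rewrite addr0 br0l addr0. Qed.
Lemma brNl x z : br (- x) z = - br x z.
Proof. by rewrite -scaleN1r brZl scaleN1r. Qed.
Lemma brLr a x y z : br z (a *: x + y) = a *: br z x + br z y.
Proof. by rewrite brA brLl opprD -scalerN -!brA. Qed.
Lemma brDr x y z : br z (x + y) = br z x + br z y.
Proof. by have := brLr 1 x y z; rewrite !scale1r. Qed.
Lemma brNr x z : br z (- x) = - br z x.
Proof. by rewrite brA brNl opprK -brA. Qed.

Lemma JL a x y : J (a *: x + y) = a *: J x + J y.
Proof. by case: HJ. Qed.
Lemma JJ x : J (J x) = - x.
Proof. by case: HJ. Qed.
Lemma J0 : J 0 = 0.
Proof.
have E := JL 1 0 0; rewrite scaler0 addr0 scale1r in E.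
by apply: (addrI (J 0)); rewrite addr0 -E.
Qed.
Lemma JD x y : J (x + y) = J x + J y.
Proof. by have := JL 1 x y; rewrite !scale1r. Qed.
Lemma JZ a x : J (a *: x) = a *: J x.
Proof. by have := JL a x 0; rewrite addr0 J0 addr0. Qed.
Lemma JN x : J (- x) = - J x.
Proof. by rewrite -scaleN1r JZ scaleN1r. Qed.
Lemma JB x y : J (x - y) = J x - J y.
Proof. by rewrite JD JN. Qed.

Lemma ipJl x y : ip (J x) y = - ip x (J y).
Proof. by rewrite -Hcomp JJ (ipNl Hip). Qed.
Lemma ipJr x y : ip x (J y) = - ip (J x) y.
Proof. by rewrite ipJl opprK. Qed.

Notation comm := (comm br).
Notation z0 := (z0 br J).
Notation vpart := (vpart br J ip).
Notation nJ := (nJ br J).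
Notation z1 := (z1 br J ip).
Notation j := (jmap br J ip).

Lemma comm0 : comm 0.
Proof. by exists [::]; rewrite big_nil. Qed.
Lemma commL a x y : comm x -> comm y -> comm (a *: x + y).
Proof.
move=> [s1 ->] [s2 ->]; exists ([seq (a *: p.1, p.2) | p <- s1] ++ s2).
rewrite big_cat big_map /= scaler_sumr; congr (_ + _).
by apply: eq_bigr => p _; rewrite brZl.
Qed.
Lemma commD x y : comm x -> comm y -> comm (x + y).
Proof. by move=> ??; rewrite -(scale1r x); apply: commL. Qed.
Lemma commZ a x : comm x -> comm (a *: x).
Proof. by move=> ?; rewrite -(addr0 (a *: x)); apply: commL => //; apply: comm0. Qed.
Lemma commN x : comm x -> comm (- x).
Proof. by move=> ?; rewrite -scaleN1r; apply: commZ. Qed.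
Lemma commB x y : comm x -> comm y -> comm (x - y).
Proof. by move=> ??; apply: commD => //; apply: commN. Qed.
Lemma comm_br x y : comm (br x y).
Proof. by exists [:: (x, y)]; rewrite big_seq1. Qed.

Lemma comm_center x y : comm x -> br x y = 0.
Proof. by move=> Hx; apply: (H2.2 _ Hx). Qed.

Lemma z0_0 : z0 0.
Proof. by exists 0, 0; rewrite J0 addr0; split => //; apply: comm0. Qed.
Lemma z0L a x y : z0 x -> z0 y -> z0 (a *: x + y).
Proof.
move=> [a1 [b1 [Ha1 Hb1 ->]]] [a2 [b2 [Ha2 Hb2 ->]]].
exists (a *: a1 + a2), (a *: b1 + b2); split; try by apply: commL.
by rewrite JL scalerDr addrACA.
Qed.
Lemma z0D x y : z0 x -> z0 y -> z0 (x + y).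
Proof. by move=> ??; rewrite -(scale1r x); apply: z0L. Qed.
Lemma z0N x : z0 x -> z0 (- x).
Proof. by move=> ?; rewrite -scaleN1r -(addr0 (_ *: _)); apply: z0L => //; apply: z0_0. Qed.
Lemma z0_comm x : comm x -> z0 x.
Proof. by move=> ?; exists x, 0; rewrite J0 addr0; split => //; apply: comm0. Qed.
Lemma z0J x : z0 x -> z0 (J x).
Proof.
move=> [a [b [Ha Hb ->]]]; exists (- b), a; split => //; first exact: commN.
by rewrite JD JJ addrC.
Qed.
Lemma z0_center c y : z0 c -> br c y = 0.
Proof.
move=> [a [b [Ha Hb ->]]]; rewrite brDl comm_center // add0r.
by apply: HJc.
Qed.
Lemma z0_centerr c y : z0 c -> br y c = 0.
Proof. by move=> Hc; rewrite brA z0_center // oppr0. Qed.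

Lemma vpartL a x y : vpart x -> vpart y -> vpart (a *: x + y).
Proof. by move=> Hx Hy c Hc; rewrite (ipLl Hip) Hx // Hy // mulr0 addr0. Qed.
Lemma vpart0 : vpart 0.
Proof. by move=> c _; rewrite (ip0l Hip). Qed.
Lemma vpartD x y : vpart x -> vpart y -> vpart (x + y).
Proof. by move=> ??; rewrite -(scale1r x); apply: vpartL. Qed.
Lemma vpartZ a x : vpart x -> vpart (a *: x).
Proof. by move=> ?; rewrite -(addr0 (a *: x)); apply: vpartL => //; apply: vpart0. Qed.
Lemma vpartN x : vpart x -> vpart (- x).
Proof. by move=> ?; rewrite -scaleN1r; apply: vpartZ. Qed.
Lemma vpartB x y : vpart x -> vpart y -> vpart (x - y).
Proof. by move=> ??; apply: vpartD => //; apply: vpartN. Qed.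
Lemma vpartJ x : vpart x -> vpart (J x).
Proof. by move=> Hx c Hc; rewrite ipJl Hx ?oppr0 //; apply: z0J. Qed.

Lemma vuniq x y : vpart x -> vpart y -> (forall w, vpart w -> ip x w = ip y w) -> x = y.
Proof.
move=> Hx Hy E; apply/eqP; rewrite -subr_eq0; apply/eqP; apply: (ip_eq0 Hip).
by rewrite (ipBr Hip) !(ipBl Hip) !E ?subrr // vpartB.
Qed.

Definition ebase : seq V := vbasis (fullv : {vspace V}).
Definition gens : seq V := [seq br a c | a <- ebase, c <- ebase].

Lemma br_gens p q : br p q \in <<gens>>%VS.
Proof.
move: q; move: p (span_full p).
apply: (span_closed (P := fun p => forall q, br p q \in <<gens>>%VS)).
- by move=> q; rewrite br0l mem0v.
- by move=> a x y Hx Hy q; rewrite brLl memvD // memvZ.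
move=> p Hp q; move: q (span_full q).
apply: (span_closed (P := fun q => br p q \in <<gens>>%VS)).
- by rewrite br0r mem0v.
- by move=> a x y Hx Hy; rewrite brLr memvD // memvZ.
by move=> q Hq; apply: memv_span; apply: allpairs_f.
Qed.

Lemma comm_span x : comm x -> x \in <<gens>>%VS.
Proof.
move=> [s ->]; elim/big_rec: _; first exact: mem0v.
by move=> p y _ Hy; rewrite memvD // br_gens.
Qed.

Lemma span_comm x : x \in <<gens>>%VS -> comm x.
Proof.
apply: span_closed; first exact: comm0; first by move=> *; apply: commL.
by move=> y /allpairsP [[p q] [_ _ ->]]; apply: comm_br.
Qed.

Definition gens0 := gens ++ map J gens.

Lemma J_span0 x : x \in <<gens>>%VS -> J x \in <<gens0>>%VS.
Proof.
apply: (span_closed (P := fun x => J x \in <<gens0>>%VS)).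
- by rewrite J0 mem0v.
- by move=> a x1 y Hx Hy; rewrite JL memvD // memvZ.
by move=> y Hy; apply: memv_span; rewrite mem_cat map_f ?orbT.
Qed.

Lemma z0_span x : z0 x -> x \in <<gens0>>%VS.
Proof.
move=> [a [b [Ha Hb ->]]]; rewrite memvD //; last by apply: J_span0; apply: comm_span.
by apply: (span_sub (s := gens)) => [y Hy|]; [rewrite mem_cat Hy | apply: comm_span].
Qed.

Lemma span_z0 x : x \in <<gens0>>%VS -> z0 x.
Proof.
apply: span_closed; first exact: z0_0; first by move=> *; apply: z0L.
move=> y; rewrite mem_cat => /orP [Hy | /mapP [g Hg ->]].
  by apply: z0_comm; apply: span_comm; apply: memv_span.
by apply: z0J; apply: z0_comm; apply: span_comm; apply: memv_span.
Qed.

Lemma decomp x : exists c, z0 c /\ vpart (x - c).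
Proof.
have [p [Hp Ep]] := proj_pred Hip z0_span span_z0 x.
by exists p; split => // w Hw; rewrite (ipBl Hip) Ep // subrr.
Qed.

Lemma j_exists z v : exists u, j_spec br J ip z v u.
Proof.
have Hf : linf (fun w => ip z (br v w)).
  by move=> a x y; rewrite brLr (ipLr Hip).
have [u0 [_ Eu0]] := riesz_pred Hip (P := fun _ => True) (s := ebase)
   (fun x _ => span_full x) (fun _ _ => I) Hf.
have [c [Hc Hv]] := decomp u0.
exists (u0 - c); split => // w Hw.
by rewrite (ipBl Hip) Eu0 // (ipC Hip c) Hw // subr0.
Qed.

Lemma jP z v : j_spec br J ip z v (j z v).
Proof. by rewrite /jmap; apply: epsilon_spec; apply: j_exists. Qed.

Definition om z x y := ip z (br x y).
Definition Sf z v w := om z (J v) w + om z v (J w).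
Definition Df z v w := om z v w - om z (J v) (J w).
Definition Nij v w := br v w + J (br (J v) w + br v (J w)) - br (J v) (J w).
Definition G z := forall v w, vpart v -> vpart w -> ip z (Nij v w) = 0.

Lemma omLz a z1 z2 x y : om (a *: z1 + z2) x y = a * om z1 x y + om z2 x y.
Proof. exact: (ipLl Hip). Qed.
Lemma omDz z1 z2 x y : om (z1 + z2) x y = om z1 x y + om z2 x y.
Proof. exact: (ipDl Hip). Qed.
Lemma omNz z x y : om (- z) x y = - om z x y.
Proof. exact: (ipNl Hip). Qed.
Lemma omJJz z x y : om (J (J z)) x y = - om z x y.
Proof. by rewrite JJ omNz. Qed.
Lemma omJJl z x y : om z (J (J x)) y = - om z x y.
Proof. by rewrite /om JJ brNl (ipNr Hip). Qed.
Lemma omJJr z x y : om z x (J (J y)) = - om z x y.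
Proof. by rewrite /om JJ brNr (ipNr Hip). Qed.
Lemma omA z x y : om z y x = - om z x y.
Proof. by rewrite /om brA (ipNr Hip). Qed.
Lemma om_proj p q x y : (forall c, comm c -> ip p c = ip q c) -> om p x y = om q x y.
Proof. by move=> H; rewrite /om H //; apply: comm_br. Qed.

Lemma ipNij z v w : ip z (Nij v w) = Df z v w - Sf (J z) v w.
Proof.
by rewrite /Nij (ipBr Hip) (ipDr Hip) ipJr (ipDr Hip) /Df /Sf /om; ring.
Qed.
Lemma DfJ z v w : Df z v (J w) = Sf z v w.
Proof. by rewrite /Df /Sf omJJr; ring. Qed.
Lemma DfJJ z v w : Df z v (J (J w)) = - Df z v w.
Proof. by rewrite DfJ /Sf /Df omJJr; ring. Qed.
Lemma SfDz z1 z2 v w : Sf (z1 + z2) v w = Sf z1 v w + Sf z2 v w.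
Proof. by rewrite /Sf !omDz; ring. Qed.
Lemma DfDz z1 z2 v w : Df (z1 + z2) v w = Df z1 v w + Df z2 v w.
Proof. by rewrite /Df !omDz; ring. Qed.
Lemma Sf_proj p q v w : (forall c, comm c -> ip p c = ip q c) -> Sf p v w = Sf q v w.
Proof. by move=> H; rewrite /Sf !(om_proj _ _ H). Qed.
Lemma Df_proj p q v w : (forall c, comm c -> ip p c = ip q c) -> Df p v w = Df q v w.
Proof. by move=> H; rewrite /Df !(om_proj _ _ H). Qed.

Lemma GJ z : G z -> G (J z).
Proof.
move=> HG v w Hv Hw; have := HG (J v) w (vpartJ Hv) Hw.
rewrite !ipNij /Df /Sf !omJJl !omJJz; lra.
Qed.
Lemma GL a z1 z2 : G z1 -> G z2 -> G (a *: z1 + z2).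
Proof. by move=> H1 H2' v w Hv Hw; rewrite (ipLl Hip) H1 // H2' // mulr0 addr0. Qed.
Lemma GD z1 z2 : G z1 -> G z2 -> G (z1 + z2).
Proof. by move=> ??; rewrite -(scale1r z1); apply: GL. Qed.
Lemma GN z : G z -> G (- z).
Proof. by move=> H v w Hv Hw; rewrite (ipNl Hip) H // oppr0. Qed.
Lemma G_back z : G (J z) -> G z.
Proof. by move=> /GJ; rewrite JJ => /GN; rewrite opprK. Qed.

Lemma jv z v : vpart (j z v).
Proof. exact: (jP z v).1. Qed.
Lemma jip z v w : vpart w -> ip (j z v) w = om z v w.
Proof. exact: (jP z v).2. Qed.

Lemma in_u_j z : in_u br J ip (j z) <->
  (forall v w, vpart v -> vpart w -> Sf z v w = 0).
Proof.
split.
  move=> [_ _ Hc] v w Hv Hw; have HJw := vpartJ Hw; rewrite /Sf -jip // -jip // Hc //.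
  by rewrite ipJl addNr.
move=> H; split.
- by move=> v _; apply: jv.
- by move=> v w Hv Hw; rewrite jip // (ipC Hip) jip // (omA z v w) opprK.
move=> v Hv; apply: vuniq; [exact: jv | apply: vpartJ; exact: jv |].
move=> w Hw; have HJw := vpartJ Hw; rewrite ipJl !jip //.
have := H v w Hv Hw; rewrite /Sf; lra.
Qed.

Lemma Sf_Df z : (forall v w, vpart v -> vpart w -> Sf z v w = 0) <->
  (forall v w, vpart v -> vpart w -> Df z v w = 0).
Proof.
split=> H v w Hv Hw.
  by rewrite -[w]opprK -JJ DfJ H //; apply: vpartJ; apply: vpartN.
by rewrite -DfJ H //; apply: vpartJ.
Qed.

Definition Tm z v := j (J z) v - 2^-1 *: commJ J (j z) v.

Lemma Tv z v : vpart (Tm z v).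
Proof.
by apply: vpartB; [exact: jv | apply: vpartZ; apply: vpartB; [apply: vpartJ|]; exact: jv].
Qed.
Lemma Tip z v w : vpart w -> ip (Tm z v) w = om (J z) v w + 2^-1 * Sf z v w.
Proof.
move=> Hw; have HJw := vpartJ Hw; rewrite /Tm /commJ (ipBl Hip) (ipZl Hip) (ipBl Hip) ipJl !jip //.
by rewrite /Sf; ring.
Qed.

Lemma in_u_T z : in_u br J ip (Tm z) <-> G z.
Proof.
split.
  move=> [_ _ Hc] v w Hv Hw; have HJw := vpartJ Hw.
  have := congr1 (ip^~ w) (Hc v Hv); rewrite /= ipJl !Tip //.
  rewrite ipNij /Df /Sf !omJJl !omJJr; lra.
move=> HG; split.
- by move=> v _; apply: Tv.
- move=> v w Hv Hw; rewrite Tip // (ipC Hip) Tip // /Sf.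
  rewrite (omA (J z) w v) (omA z (J w) v) (omA z w (J v)); ring.
move=> v Hv; apply: vuniq; [exact: Tv | apply: vpartJ; exact: Tv |].
move=> w Hw; have HJw := vpartJ Hw; rewrite ipJl !Tip //.
have := HG v w Hv Hw; rewrite ipNij /Df /Sf !omJJl !omJJr; lra.
Qed.

Lemma minus_iff z :
  (forall v, vpart v -> minus_part J (j (J z)) v = 2^-1 *: commJ J (j z) v) <->
  G (J z).
Proof.
split.
  move=> H v w Hv Hw; have HJw := vpartJ Hw.
  rewrite ipNij /Df /Sf !omJJz.
  have := congr1 (ip^~ w) (H v Hv).
  rewrite /= /minus_part /commJ !(ipZl Hip) (ipDl Hip) (ipBl Hip) !ipJl !jip //.
  lra.
move=> HG v Hv; apply: vuniq.
- by apply: vpartZ; apply: vpartD; [|apply: vpartJ]; exact: jv.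
- by apply: vpartZ; apply: vpartB; [apply: vpartJ|]; exact: jv.
move=> w Hw; have HJw := vpartJ Hw.
have := HG v w Hv Hw; rewrite ipNij /Df /Sf !omJJz => E.
rewrite /minus_part /commJ !(ipZl Hip) (ipDl Hip) (ipBl Hip) !ipJl !jip //.
lra.
Qed.

Lemma Nij_l v w c : z0 c -> Nij (v + c) w = Nij v w.
Proof.
move=> Hc; have HJc' := z0J Hc.
rewrite /Nij (JD v c) !brDl (z0_center w Hc) (z0_center (J w) Hc).
by rewrite (z0_center w HJc') (z0_center (J w) HJc') !addr0.
Qed.
Lemma Nij_r v w c : z0 c -> Nij v (w + c) = Nij v w.
Proof.
move=> Hc; have HJc' := z0J Hc.
rewrite /Nij (JD w c) !brDr (z0_centerr v Hc) (z0_centerr (J v) Hc).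
by rewrite (z0_centerr v HJc') (z0_centerr (J v) HJc') !addr0.
Qed.
Lemma Nij_z0 v w : z0 (Nij v w).
Proof.
apply: z0D; last by apply: z0N; apply: z0_comm; apply: comm_br.
apply: z0D; first by apply: z0_comm; apply: comm_br.
by apply: z0J; apply: z0_comm; apply: commD; apply: comm_br.
Qed.

Lemma G_int : (forall z, comm z -> G z) -> integrable br J.
Proof.
move=> HG x y; change (Nij x y = 0).
have [cx [Hcx Hvx]] := decomp x; have [cy [Hcy Hvy]] := decomp y.
rewrite -(subrK cx x) -(subrK cy y) Nij_l // Nij_r //.
set n := Nij _ _; have [a [b [Ha Hb En]]] := Nij_z0 (x - cx) (y - cy).
apply: (ip_eq0 Hip); rewrite {1}/n En (ipDl Hip).
by rewrite (HG a Ha) // (GJ (HG b Hb)) // addr0.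
Qed.

Lemma int_G : integrable br J -> forall z, G z.
Proof.
move=> HI z v w _ _; have E : Nij v w = 0 by apply: HI.
by rewrite E (ip0r Hip).
Qed.

Definition Pc y := epsilon (inhabits 0)
  (fun p => comm p /\ forall w, comm w -> ip p w = ip y w).
Lemma PcP y : comm (Pc y) /\ forall w, comm w -> ip (Pc y) w = ip y w.
Proof.
exact: (epsilon_spec (inhabits (0:V)) (fun p => comm p /\ forall w, comm w -> ip p w = ip y w) (proj_pred Hip comm_span span_comm y)).
Qed.
Lemma cuniq p q : comm p -> comm q -> (forall w, comm w -> ip p w = ip q w) -> p = q.
Proof.
move=> Hp Hq E; apply/eqP; rewrite -subr_eq0; apply/eqP; apply: (ip_eq0 Hip).
by rewrite (ipBr Hip) !(ipBl Hip) !E ?subrr // commB.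
Qed.
Lemma PcL a x y : Pc (a *: x + y) = a *: Pc x + Pc y.
Proof.
apply: cuniq; first exact: (PcP _).1.
  by apply: commL; exact: (PcP _).1.
move=> w Hw; rewrite (PcP _).2 // !(ipLl Hip) !(PcP _).2 //.
Qed.
Lemma Pc0 : Pc 0 = 0.
Proof.
apply: cuniq; [exact: (PcP _).1 | exact: comm0 |].
by move=> w Hw; rewrite (PcP _).2.
Qed.

Definition M y := y + Pc (J (Pc (J y))).
Lemma ML a x y : M (a *: x + y) = a *: M x + M y.
Proof. by rewrite /M JL PcL JL PcL scalerDr addrACA. Qed.
Lemma M0 : M 0 = 0.
Proof. by rewrite /M J0 Pc0 J0 Pc0 addr0. Qed.
Lemma Mcomm y : comm y -> comm (M y).
Proof. by move=> Hy; apply: commD => //; exact: (PcP _).1. Qed.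
Lemma ipM x y : comm y -> ip (M x) y = ip x y - ip (Pc (J x)) (Pc (J y)).
Proof.
move=> Hy; rewrite /M (ipDl Hip) (PcP _).2 // ipJl (ipC Hip (Pc (J x)) (J y)).
by rewrite -((PcP (J y)).2 _ (PcP (J x)).1) (ipC Hip (Pc (J y))).
Qed.
Lemma Msym x y : comm x -> comm y -> ip (M x) y = ip x (M y).
Proof.
move=> Hx Hy; rewrite ipM // (ipC Hip x (M y)) ipM // (ipC Hip y x).
by rewrite (ipC Hip (Pc (J y))).
Qed.
Lemma Mker r : comm r -> M r = 0 -> nJ r.
Proof.
move=> Hr Mr.
have E : ip (M r) r = 0 by rewrite Mr (ip0l Hip).
rewrite ipM // in E.
set A := ip (Pc (J r)) (Pc (J r)) in E.
have E1 : ip (J r) (Pc (J r)) = A by rewrite -(PcP _).2 ?(ipC Hip) //; exact: (PcP _).1.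
have E2 : ip (Pc (J r)) (J r) = A by rewrite (ipC Hip) E1.
have E3 : ip (J r) (J r) = ip r r by apply: Hcomp.
have Hq : J r - Pc (J r) = 0.
  apply: (ip_eq0 Hip); rewrite !(ipBl Hip) !(ipBr Hip) E1 E2 E3 -/A; lra.
have HJr : comm (J r).
  by move/eqP: Hq; rewrite subr_eq0 => /eqP ->; exact: (PcP _).1.
split => //; exists (- J r); split; first exact: commN.
by rewrite JN JJ opprK.
Qed.

Lemma W_exists z : z1 z -> exists y, comm y /\ z = M y.
Proof.
move=> [Hz Hzo].
pose W u := exists y, comm y /\ u = M y.
have W_span : forall u, W u -> u \in <<map M gens>>%VS.
  move=> u [y [Hy ->]]; move: (comm_span Hy); clear Hy; move: y.
  apply: (span_closed (P := fun y => M y \in <<map M gens>>%VS)).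
  - by rewrite M0 mem0v.
  - by move=> a x1 y1 H1 H2'; rewrite ML memvD // memvZ.
  by move=> g Hg; apply: memv_span; apply: map_f.
have span_W : forall u, u \in <<map M gens>>%VS -> W u.
  apply: span_closed.
  - by exists 0; split; [exact: comm0 | rewrite M0].
  - move=> a x1 y1 [y2 [H2' ->]] [y3 [H3 ->]]; exists (a *: y2 + y3).
    by split; [exact: commL | rewrite ML].
  by move=> x /mapP [g Hg ->]; exists g; split => //; apply: span_comm; apply: memv_span.
have [p [[y0 [Hy0 ->]] Ep]] := proj_pred Hip W_span span_W z.
exists y0; split => //.
have Hr : comm (z - M y0) by apply: commB => //; apply: Mcomm.
have Hor : forall y, comm y -> ip (M (z - M y0)) y = 0.
  move=> y Hy; rewrite Msym // (ipBl Hip) Ep ?subrr //.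
  by exists y.
have MR : M (z - M y0) = 0 by apply: (ip_eq0 Hip); apply: Hor; apply: Mcomm.
have HnJ := Mker Hr MR.
have E1 : ip z (z - M y0) = 0 by apply: Hzo.
have E2 : ip (M y0) (z - M y0) = 0 by rewrite Msym // MR (ip0r Hip).
apply/eqP; rewrite -subr_eq0; apply/eqP; apply: (ip_eq0 Hip).
by rewrite {1}(ipBl Hip) E1 E2 subrr.
Qed.

Lemma DM : (forall z, G z) -> forall y v w, vpart v -> vpart w -> Df (M y) v w = 0.
Proof.
move=> HG y v w Hv Hw; have HJw := vpartJ Hw.
have sym : forall x c, comm c -> ip (J x) c = ip (Pc (J x)) c.
  by move=> x c Hc; rewrite (PcP _).2.
have E1 : Df y v w = Sf (J y) v w.
  by have := HG y v w Hv Hw; rewrite ipNij => /eqP; rewrite subr_eq0 => /eqP.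
rewrite (Sf_proj _ _ (sym y)) -DfJ in E1.
set y' := Pc (J y) in E1.
have E4 : Df y' v (J w) = Sf (J y') v (J w).
  by have := HG y' v (J w) Hv HJw; rewrite ipNij => /eqP; rewrite subr_eq0 => /eqP.
rewrite (Sf_proj _ _ (sym y')) -DfJ DfJJ in E4.
by rewrite /M DfDz E1 E4 -/y' addNr.
Qed.

Lemma hard : (forall z, G z) -> forall z, z1 z ->
  forall v w, vpart v -> vpart w -> Df z v w = 0.
Proof.
move=> HG z Hz v w Hv Hw; have [y [_ ->]] := W_exists Hz; exact: DM.
Qed.

Lemma nJ_J n : nJ n -> nJ (J n).
Proof.
move=> [Hn [y [Hy Ey]]]; split.
  by rewrite Ey JJ; apply: commN.
by exists n; split => //.
Qed.
Lemma nJ0 : nJ 0.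
Proof. by split; [exact: comm0 | exists 0; rewrite J0; split => //; exact: comm0]. Qed.
Lemma nJL a x y : nJ x -> nJ y -> nJ (a *: x + y).
Proof.
move=> [Hx [x' [Hx' Ex]]] [Hy [y' [Hy' Ey]]]; split; first by apply: commL.
by exists (a *: x' + y'); split; [exact: commL | rewrite Ex Ey JL].
Qed.

Section WithB.
Variable b : {vspace V}.
Hypothesis Hb1 : forall x, x \in b -> nJ x.
Hypothesis Hb2 : forall x, nJ x -> exists a c, [/\ a \in b, c \in b & x = a + J c].

Definition sb := vbasis b ++ map J (vbasis b).

Lemma nJ_span x : nJ x -> x \in <<sb>>%VS.
Proof.
move=> /Hb2 [a [c [Ha Hc ->]]]; apply: memvD.
  by apply: (span_sub (s := vbasis b)) => [y Hy|]; [rewrite mem_cat Hy | exact: span_vb].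
move: (span_vb Hc); clear Hc; move: c.
apply: (span_closed (P := fun c => J c \in <<sb>>%VS)).
- by rewrite J0 mem0v.
- by move=> k x1 y1 H1 H2'; rewrite JL memvD // memvZ.
by move=> y Hy; apply: memv_span; rewrite mem_cat map_f ?orbT.
Qed.

Lemma span_nJ x : x \in <<sb>>%VS -> nJ x.
Proof.
apply: span_closed; first exact: nJ0; first by move=> *; apply: nJL.
move=> y; rewrite mem_cat => /orP [Hy | /mapP [g Hg ->]].
  by apply: Hb1; apply: vbasis_mem.
by apply: nJ_J; apply: Hb1; apply: vbasis_mem.
Qed.

Lemma easy : (forall z, z1 z -> forall v w, vpart v -> vpart w -> Df z v w = 0) ->
  (forall z, z \in b -> G z) -> forall z, comm z -> G z.
Proof.
move=> HD Hbg.
have G_z1 : forall z, z1 z -> G z.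
  move=> z Hz v w Hv Hw; have HJw := vpartJ Hw.
  have Hz' : z1 (Pc (J z)).
    split; first exact: (PcP _).1.
    move=> n Hn; rewrite (PcP _).2; last exact: Hn.1.
    by rewrite ipJl (Hz.2 (J n) (nJ_J Hn)) oppr0.
  have sym : forall c, comm c -> ip (J z) c = ip (Pc (J z)) c.
    by move=> c Hc; rewrite (PcP _).2.
  rewrite ipNij (HD z Hz v w Hv Hw) (Sf_proj _ _ sym) -DfJ (HD _ Hz') //.
  by rewrite subrr.
move=> y Hy.
have [q [Hq Eq]] := proj_pred Hip nJ_span span_nJ y.
have Hz1 : z1 (y - q).
  split; first by apply: commB => //; exact: Hq.1.
  by move=> n Hn; rewrite (ipBl Hip) Eq // subrr.
have [a [c [Ha Hc Eqac]]] := Hb2 Hq.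
have -> : y = (y - q) + (a + J c) by rewrite -Eqac subrK.
apply: GD; first exact: G_z1.
by apply: GD; [exact: Hbg | apply: GJ; exact: Hbg].
Qed.

Lemma main_sec :
  (integrable br J <->
     ((forall z, z1 z -> in_u br J ip (j z)) /\
      (forall z, z \in b ->
         in_u br J ip (fun v => j (J z) v - 2^-1 *: commJ J (j z) v))))
  /\
  (integrable br J <->
     ((forall z, z1 z -> in_u br J ip (j z)) /\
      (forall z, z \in b -> forall v, vpart v ->
         minus_part J (j (J z)) v = 2^-1 *: commJ J (j z) v))).
Proof.
have K1 : (forall z, z1 z -> in_u br J ip (j z)) <->
   (forall z, z1 z -> forall v w, vpart v -> vpart w -> Df z v w = 0).
  split=> H z Hz.
    by apply/Sf_Df; apply/in_u_j; apply: H.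
  by apply/in_u_j; apply/Sf_Df; apply: H.
have K2 : (forall z, z \in b ->
         in_u br J ip (fun v => j (J z) v - 2^-1 *: commJ J (j z) v)) <->
     (forall z, z \in b -> G z).
  by split=> H z Hz; [apply/in_u_T; apply: H | apply/(in_u_T z); apply: H].
have K3 : (forall z, z \in b -> forall v, vpart v ->
         minus_part J (j (J z)) v = 2^-1 *: commJ J (j z) v) <->
     (forall z, z \in b -> G z).
  split=> H z Hz.
    by apply: G_back; apply/minus_iff; apply: H.
  by apply/minus_iff; apply: GJ; apply: H.
have K0 : integrable br J <->
   ((forall z, z1 z -> forall v w, vpart v -> vpart w -> Df z v w = 0) /\
    (forall z, z \in b -> G z)).
  split.
    move=> HI; have HG := int_G HI; split; first exact: hard.
    by move=> z _; apply: HG.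
  by move=> [HD HbG]; apply: G_int; apply: easy.
split.
  by rewrite K1 K2.
by rewrite K1 K3.
Qed.
End WithB.

End Lie.

Theorem mainTheorem12 (R : realType) (V : vectType R)
  (br : V -> V -> V) (J : V -> V) (ip : V -> V -> R) (b : {vspace V}) :
  lie_bracket br ->
  two_step_nilpotent br ->
  almost_complex J ->
  (forall x, comm br x -> center br (J x)) ->
  inner_product ip ->
  J_compatible J ip ->
  (* b is a subspace of n'_J with orthogonal decomposition n'_J = b (+) J b *)
  (forall x, x \in b -> nJ br J x) ->
  (forall x, nJ br J x -> exists a c, [/\ a \in b, c \in b & x = a + J c]) ->
  (forall a c, a \in b -> c \in b -> ip a (J c) = 0) ->
  let j := jmap br J ip in
  (integrable br J <->
     ((forall z, z1 br J ip z -> in_u br J ip (j z)) /\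
      (forall z, z \in b ->
         in_u br J ip (fun v => j (J z) v - 2^-1 *: commJ J (j z) v))))
  /\
  (integrable br J <->
     ((forall z, z1 br J ip z -> in_u br J ip (j z)) /\
      (forall z, z \in b -> forall v, vpart br J ip v ->
         minus_part J (j (J z)) v = 2^-1 *: commJ J (j z) v))).
Proof.
move=> Hlie H2 HJ HJc Hip Hcomp Hb1 Hb2 _ j.
by apply: main_sec.
Qed.
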